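(* Let $\ell\le L_1$ be positive integers and $L\ge2$, and let $\mathcal M$ be a $(p,n,L_1)$-multi-labelling of an $L$-graph with $r(\mathcal M)\le L/2$. For $j\in[p]$ let $N^c_j$ be the number of $p$-vertices whose tuple contains $j$. Then $$\sum_{j:\,N^c_j\ge3}N^c_j\le\big(6\Delta(\mathcal M)-6\big)\ell.$$
   Context: An $L$-graph is a cycle with $2L$ vertices alternating between $n$-vertices and $p$-vertices. A $(p,n,L_1)$-multi-labelling assigns an $n$-label in $[n]$ to each $n$-vertex and a tuple of $d_r$ distinct $p$-labels in $[p]$ ($\ell\le d_r\le L_1$) to the $r$-th $p$-vertex, such that the $n$-label of each $n$-vertex differs from those of the $n$-vertices immediately preceding and following it in the cycle, and for each $n$-label $i$ and $p$-label $j$ the number of edges with $n$-endpoint labelled $i$ and $p$-endpoint's tuple containing $j$ is $0$ or $\ge2$. $r(\mathcal M)$ and $c(\mathcal M)$ are the numbers of distinct $n$- and $p$-labels, and $\Delta(\mathcal M)=1+\frac L2+\sum_{r=1}^L\frac{d_r}{2\ell}-r(\mathcal M)-\frac{c(\mathcal M)}{\ell}$. *)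

(* Defs.v *)
From mathcomp Require Import all_boot all_order all_algebra.
Set Implicit Arguments. Unset Strict Implicit. Unset Printing Implicit Defensive.
Import Order.TTheory GRing.Theory Num.Theory.

(* An L-graph: cycle v_0, u_0, v_1, u_1, ..., v_{L-1}, u_{L-1}, (back to v_0),
   n-vertices v_r and p-vertices u_r indexed by r : 'I_L.
   Edges: (v_r, u_r) and (u_r, v_{r+1 mod L}), 2L edges in total.
   A multi-labelling is given by
     a : 'I_L -> 'I_n          (n-label of v_r; labels [n] = {0..n-1})
     T : 'I_L -> seq 'I_p      (tuple of p-labels of u_r; [p] = {0..p-1}). *)

Definition edge_count (n p L : nat) (a : 'I_L -> 'I_n) (T : 'I_L -> seq 'I_p)
  (i : 'I_n) (j : 'I_p) : nat :=
  #|[set r : 'I_L | (a r == i) && (j \in T r)]|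
  + #|[set r : 'I_L | (a (ordS r) == i) && (j \in T r)]|.

Definition is_multi_labelling (p n L1 ell L : nat)
  (a : 'I_L -> 'I_n) (T : 'I_L -> seq 'I_p) : Prop :=
  (forall r : 'I_L, uniq (T r) /\ ell <= size (T r) <= L1) /\
  (forall r : 'I_L, a r != a (ordS r)) /\
  (forall (i : 'I_n) (j : 'I_p),
      edge_count a T i j = 0 \/ 2 <= edge_count a T i j).

Definition rM (n L : nat) (a : 'I_L -> 'I_n) : nat := #|[set a r | r : 'I_L]|.

Definition cM (p L : nat) (T : 'I_L -> seq 'I_p) : nat :=
  #|[set j : 'I_p | [exists r : 'I_L, j \in T r]]|.

Definition Nc (p L : nat) (T : 'I_L -> seq 'I_p) (j : 'I_p) : nat :=
  #|[set r : 'I_L | j \in T r]|.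

Local Open Scope ring_scope.

Definition DeltaM (p n ell L : nat) (a : 'I_L -> 'I_n) (T : 'I_L -> seq 'I_p) : rat :=
  1 + (L%:R / 2) + \sum_(r : 'I_L) ((size (T r))%:R / (2 * ell%:R))
  - (rM a)%:R - (cM T)%:R / ell%:R.

(* Main.v *)
Require Import Defs.
From mathcomp Require Import all_boot all_order all_algebra.
From mathcomp Require Import ring lra zify.
Import Order.TTheory GRing.Theory Num.Theory.

Lemma card_set_sum (T : finType) (P : pred T) :
  #|[set x | P x]| = (\sum_(x : T) (P x : nat))%N.
Proof.
rewrite -sum1dep_card big_mkcond /=; apply: eq_bigr => x _; by case: (P x).
Qed.

Lemma Nc_ne1 (p n L1 ell L : nat) (a : 'I_L -> 'I_n) (T : 'I_L -> seq 'I_p) j :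
  @is_multi_labelling p n L1 ell L a T -> Nc T j != 1%N.
Proof.
move=> [_ [Hne He]]; rewrite /Nc; apply/negP => /cards1P [r0 Hr0].
have Hin : forall r, (j \in T r) = (r == r0).
  by move=> r; rewrite -in_set1 -Hr0 inE.
have E : edge_count a T (a r0) j = 1%N.
  rewrite /edge_count.
  have -> : [set r | (a r == a r0) && (j \in T r)] = [set r0].
    apply/setP => r; rewrite !inE Hin; case: (eqVneq r r0) => [->|]; by rewrite ?eqxx ?andbF.
  have -> : [set r | (a (ordS r) == a r0) && (j \in T r)] = set0.
    apply/setP => r; rewrite !inE Hin; case: (eqVneq r r0) => [->|]; rewrite ?andbF //.
    by rewrite eq_sym (negbTE (Hne r0)).
  by rewrite cards1 cards0.
by case: (He (a r0) j); rewrite E.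
Qed.

Local Open Scope ring_scope.

Theorem lemmaC4 (p n L1 ell L : nat) (a : 'I_L -> 'I_n) (T : 'I_L -> seq 'I_p) :
  (0 < ell)%N -> (ell <= L1)%N -> (2 <= L)%N ->
  @is_multi_labelling p n L1 ell L a T ->
  (2 * rM a <= L)%N ->
  ((\sum_(j : 'I_p | (3 <= Nc T j)%N) Nc T j)%:R : rat)
    <= (6 * @DeltaM p n ell L a T - 6) * ell%:R.
Proof.
move=> Hell _ _ HM Hr.
set X := (\sum_(j : 'I_p | (3 <= Nc T j)%N) Nc T j)%N.
set S := (\sum_(j : 'I_p) Nc T j)%N.
have HS : (\sum_(r : 'I_L) size (T r))%N = S.
  rewrite /S /Nc (eq_bigr (fun j : 'I_p => \sum_(r : 'I_L) ((j \in T r) : nat))%N); last first.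
    by move=> j _; rewrite (card_set_sum _ (fun r => j \in T r)).
  rewrite exchange_big /=.
  apply: eq_bigr => r _.
  have [Hu _] := (HM.1 r).
  rewrite -(card_uniqP Hu) -sum1_card big_mkcond /=.
  by apply: eq_bigr => j _.
have Hc : cM T = (\sum_(j : 'I_p) (0 < Nc T j)%N : nat)%N.
  rewrite /cM (card_set_sum _ (fun j => [exists r, j \in T r])); apply: eq_bigr => j _.
  congr (nat_of_bool _); rewrite card_gt0; apply/existsP/set0Pn.
    by move=> [r Hr0]; exists r; rewrite inE.
  by move=> [r]; rewrite inE => Hr0; exists r.
have key : (X + 6 * cM T <= 3 * S)%N.
  rewrite Hc /X /S big_mkcond /= big_distrr /= -big_split /= big_distrr /=.
  apply: leq_sum => j _.
  have := @Nc_ne1 _ _ _ _ _ a T j HM.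
  case: (leqP 3 (Nc T j)) => H; case: (posnP (Nc T j)) => H0 /=; lia.
have keyR : X%:R + 6 * (cM T)%:R <= 3 * S%:R :> rat.
  have := key; rewrite -(ler_nat rat) natrD !natrM.
  by move=> h; apply: le_trans h; rewrite lexx.
have HrR : 2 * (rM a)%:R <= L%:R :> rat.
  by have := Hr; rewrite -(ler_nat rat) natrM.
have ell0 : ell%:R != 0 :> rat by rewrite pnatr_eq0 -lt0n.
have ellp : 0 < ell%:R :> rat by rewrite ltr0n.
have E : (6 * DeltaM ell a T - 6) * ell%:R
   = 3 * S%:R - 6 * (cM T)%:R + (L%:R - 2 * (rM a)%:R) * (3 * ell%:R) :> rat.
  rewrite /DeltaM -mulr_suml -natr_sum HS.
  field; exact: ell0.
rewrite E.
have : 0 <= (L%:R - 2 * (rM a)%:R) * (3 * ell%:R) :> rat.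
  apply: mulr_ge0; first by rewrite subr_ge0.
  by rewrite mulr_ge0 // ltW.
lra.
Qed.
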